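(* For any random vector $\vec{x}=(\vec{x}(0),\dots,\vec{x}(k-1))$ of real random variables with finite expectations (not necessarily independent), $$\mathbb{E}\Big[\max_{j<k}\vec{x}(j)\Big]-\max_{j<k}\mathbb{E}[\vec{x}(j)]\le\frac12\sum_{j<k}\sqrt{\mathrm{Var}(\vec{x}(j))}.$$ *)

(* Defs.v *)
From HB Require Import structures.
From mathcomp Require Import all_boot all_order all_algebra.
From mathcomp Require Import all_classical all_reals all_analysis.
Set Implicit Arguments. Unset Strict Implicit. Unset Printing Implicit Defensive.

(* Main.v *)
Require Import Defs.
From HB Require Import structures.
From mathcomp Require Import all_boot all_order all_algebra.
From mathcomp Require Import all_classical all_reals all_analysis.
From mathcomp Require Import measurable_realfun lra.
Import Order.TTheory GRing.Theory Num.Theory.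
Local Open Scope ring_scope.
Local Open Scope ereal_scope.

Section S.
Context d (T : measurableType d) (R : realType) (P : probability T R).

Lemma key (X : T -> R) : X \in Lfun P 1 ->
  \int[P]_w ((EFin \o (X \- cst (fine 'E_P[X]))%R)^\+ w)
    <= (2^-1)%:E * sqrte 'V_P[X].
Proof.
move=> hX.
set m := fine 'E_P[X].
set Y := (X \- cst m)%R.
have hY : Y \in Lfun P 1 by rewrite rpredB // Lfun_cst.
have iY : P.-integrable setT (EFin \o Y) by apply/Lfun1_integrable.
have mY : measurable_fun setT Y.
  by apply/measurable_EFinP; exact: measurable_int iY.
have E0 : \int[P]_w (EFin \o Y) w = 0.
  have := expectationB hX (Lfun_cst P m 1).
  rewrite expectation_cst /m fineK ?expectation_fin_num // subee ?expectation_fin_num//.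
  by rewrite /Y /m unlock => h; exact: h.
set a := \int[P]_w ((EFin \o Y)^\+ w).
set b := \int[P]_w ((EFin \o Y)^\- w).
have a0 : 0 <= a by apply: integral_ge0 => x _; exact: funepos_ge0.
have b0 : 0 <= b by apply: integral_ge0 => x _; exact: funeneg_ge0.
have afin : a < +oo by exact: integral_funepos_lt_pinfty.
have bfin : b < +oo by exact: integral_funeneg_lt_pinfty.
have ab : a - b = 0 by rewrite -integralE.
have mpos := measurable_int _ (integrable_funepos measurableT iY).
have mneg := measurable_int _ (integrable_funeneg measurableT iY).
have habs : \int[P]_w `|(Y w)%:E| = a + b.
  rewrite -ge0_integralD //.
  apply: eq_integral => x _.
  by rewrite -[_ + _]/((_ \+ _) x) -fune_abse.
have two : (2^-1 + 2^-1 = 1 :> R)%R by rewrite [in RHS](splitr 1) mul1r.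
have H := hoelder P mY (measurable_cst (1%R:R)) (ltr0Sn R 1) (ltr0Sn R 1) two.
rewrite Lnorm1 in H.
have n1 : Lnorm P 2%:E (EFin \o cst 1%R) = 1.
  rewrite -[EFin \o cst 1%R]/(cst 1) (Lnorm_cst1 P 2).
  transitivity (@poweR R 1%E 2^-1); last exact: poweR1r.
  by congr (_ `^ _); exact: probability_setT.
have n2 : Lnorm P 2%:E (EFin \o Y) = sqrte 'V_P[X].
  rewrite unlock /= poweR12_sqrt; last first.
    by apply: integral_ge0 => x _; rewrite lee_fin powR_ge0.
  congr sqrte; rewrite /variance unlock /= unlock.
  apply: eq_integral => x _ /=.
  rewrite powR_mulrn // -normrX ger0_norm ?sqr_ge0 //.
  by rewrite /Y /m unlock expr2.
rewrite n1 n2 mule1 in H.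
have {}H : a + b <= sqrte 'V_P[X].
  rewrite -habs; apply: le_trans _ H.
  by under [leRHS]eq_integral => x _ do rewrite /= mulr1.
have ba : b = a.
  move: ab; rewrite -(fineK (_ : a \is a fin_num)); last by rewrite ge0_fin_numE.
  rewrite -(fineK (_ : b \is a fin_num)); last by rewrite ge0_fin_numE.
  by rewrite -EFinB => -[] /eqP; rewrite subr_eq0 => /eqP ->.
rewrite ba in H.
move: H; set s := sqrte _.
have s0 : 0 <= s by exact: sqrte_ge0.
move: s0; case: s => [r| |] //; last first.
  by move=> _ _; rewrite mulry gtr0_sg ?mul1e ?leey // invr_gt0.
rewrite -(fineK (_ : a \is a fin_num)); last by rewrite ge0_fin_numE.
rewrite -EFinD -EFinM !lee_fin => r0 h.
lra.
Qed.
End S.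

Theorem lemma3p5 (d : measure_display) (T : measurableType d) (R : realType)
  (P : probability T R) (k : nat) (hk : (0 < k)%N)
  (X : 'I_k -> {RV P >-> R}) (hX : forall j, (X j : T -> R) \in Lfun P 1) :
  'E_P[fun w => fine (\big[maxe/-oo]_(j < k) ((X j w)%:E))]
    - \big[maxe/-oo]_(j < k) 'E_P[X j]
  <= (2^-1)%:E * \sum_(j < k) sqrte 'V_P[X j].
Proof.
set j0 := Ordinal hk.
have iX j : P.-integrable setT (EFin \o X j) by apply/Lfun1_integrable.
set m := fun j => fine 'E_P[X j].
have hE j : 'E_P[X j] = (m j)%:E by rewrite /m fineK ?expectation_fin_num.
have [i0 _ Hmu] := @eq_bigmax _ _ _ (-oo) j0 xpredT (fun j => 'E_P[X j]) isT
  (fun i _ => leNye _).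
rewrite Hmu hE.
set F := fun w => \big[maxe/-oo]_(j < k) (X j w)%:E.
have HF w : exists i, F w = (X i w)%:E.
  rewrite /F.
  have [i _ ->] := @eq_bigmax _ _ _ (-oo) j0 xpredT (fun j => (X j w)%:E) isT
    (fun i _ => leNye _).
  by exists i.
have mF : measurable_fun setT F.
  have H s : measurable_fun setT (fun w => \big[maxe/-oo]_(j <- s) (X j w)%:E).
    elim: s => [|j s ih].
      under eq_fun do rewrite big_nil.
      exact: measurable_cst.
    under eq_fun do rewrite big_cons.
    apply: measurable_maxe => //.
    exact: measurable_int (iX j).
  exact: H.
have iF : P.-integrable setT F.
  apply: (le_integrable measurableT mF (g := fun w => \sum_(j < k) `|(X j w)%:E|)).
    move=> w _; have [i ->] := HF w.
    rewrite [leRHS]gee0_abs; last by apply: sume_ge0.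
    by rewrite (bigD1 i) //=; apply: leeDl; apply: sume_ge0.
  apply: (@integrable_sum _ _ _ P _ measurableT _ _ _ (fun j w => `|(X j w)%:E|)) => j _.
  exact: (integrable_abse (iX j)).
have -> : 'E_P[fun w => fine (F w)] = \int[P]_w F w.
  rewrite unlock; apply: eq_integral => w _.
  by have [i ->] := HF w.
have hmi i : (m i <= m i0)%R.
  rewrite -lee_fin -!hE -Hmu.
  exact: (le_bigmax _ (fun j => 'E_P[X j]) i).
set pos := fun j => (EFin \o (X j \- cst (m j)))%R^\+.
have ipos j : P.-integrable setT (pos j).
  apply: integrable_funepos => //; apply/Lfun1_integrable.
  by rewrite rpredB // Lfun_cst.
set G := fun w => (m i0)%:E + \sum_(j < k) pos j w.
have iG : P.-integrable setT G.
  apply: (@integrableD _ _ _ P _ measurableT (fun=> (m i0)%:E)).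
    exact: finite_measure_integrable_cst.
  exact: (@integrable_sum _ _ _ P _ measurableT _ _ _ pos).
have FG : \int[P]_w F w <= \int[P]_w G w.
  apply: le_integral => // w _.
  have [i ->] := HF w.
  rewrite /G (bigD1 i) //=.
  have -> : (X i w) = (m i + (X i w - m i))%R by rewrite addrC subrK.
  rewrite EFinD; apply: leeD; first by rewrite lee_fin.
  apply: le_trans (leeDl _ _); last by apply: sume_ge0 => j _; exact: funepos_ge0.
  by rewrite /pos funeposE /= le_max lexx.
have IG : \int[P]_w G w = (m i0)%:E + \sum_(j < k) \int[P]_w pos j w.
  rewrite /G integralD //; last first.
    exact: (@integrable_sum _ _ _ P _ measurableT _ _ _ pos).
    exact: finite_measure_integrable_cst.
  rewrite integral_cst // [X in _ * X](_ : _ = 1) ?mule1 //; last exact: probability_setT.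
  by rewrite integral_sum.
rewrite leeBlDl //; apply: le_trans FG _; rewrite IG; apply: leeD2l.
rewrite ge0_sume_distrr; last by move=> j _; exact: sqrte_ge0.
apply: lee_sum => j _.
exact: key.
Qed.
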